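(* Let $\Gamma$ be finite and $\alpha\in V$. The noncommutative formal power series $$P^\alpha-\mu(\alpha)\alpha=\sum_{\substack{n\ge1,\ \epsilon_1\cdots\epsilon_n\text{ a loop in }\vec\Gamma\\ \text{based at }\alpha}}\mathrm{Tr}(X_{\epsilon_1}\cdots X_{\epsilon_n})\,\epsilon_1\cdots\epsilon_n\ \in\ \mathbb C\langle\langle\mathscr X\rangle\rangle$$ is algebraic.
   Context: $\Gamma$ is a finite connected undirected graph (loops, multiple edges allowed), vertex set $V$, weighting $\mu:V\to(0,\infty)$. Directed version $\vec\Gamma$ (edge set $\vec E$): each edge with distinct endpoints $\alpha\ne\beta$ yields $\epsilon,\epsilon^{op}$ with $s(\epsilon)=t(\epsilon^{op})=\alpha$, $t(\epsilon)=s(\epsilon^{op})=\beta$; each loop yields one directed loop $\epsilon=\epsilon^{op}$. $\mathcal C=C_0(V)$, $p_\alpha$ indicator of $\alpha$; $\mathcal X$ the Hilbert $\mathcal C$-$\mathcal C$ bimodule spanned by directed edges with $p_\alpha\epsilon=\delta_{s(\epsilon),\alpha}\epsilon$, $\epsilon p_\alpha=\delta_{t(\epsilon),\alpha}\epsilon$, $\langle\epsilon'|\epsilon\rangle=\delta_{\epsilon,\epsilon'}p_{t(\epsilon)}$; $\mathcal F(\mathcal X)$ its full Fock space with creation operators $\ell(\xi)$. For a loop $e$: $X_e=\ell(\epsilon)+\ell(\epsilon)^*$; for $e$ with endpoints $\alpha\ne\beta$: $a_\epsilon=(\mu(\alpha)/\mu(\beta))^{1/4}$, $X_e=a_\epsilon\ell(\epsilon)+a_\epsilon^{-1}\ell(\epsilon^{op})^*+a_\epsilon^{-1}\ell(\epsilon^{op})+a_\epsilon\ell(\epsilon)^*$;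 $X_\epsilon=p_{s(\epsilon)}X_ep_{t(\epsilon)}$. $\mathrm{Tr}=\mathrm{tr}\circ E$ with $E(x)=PxP$ ($P$ projection onto $\mathcal C$), $\mathrm{tr}(p_v)=\mu(v)$. A loop based at $\alpha$ is a sequence $\epsilon_1,\dots,\epsilon_n$ with $s(\epsilon_1)=\alpha=t(\epsilon_n)$ and $t(\epsilon_k)=s(\epsilon_{k+1})$. Noncommutative series: $\mathscr X=\vec E\cup V$ is a finite alphabet (letters $\epsilon$ and $\alpha$). For a ring $R$ and alphabet $X$, $R\langle\langle X\rangle\rangle$ is the ring of formal sums $\sum_{w}P_ww$ over words $w$ in $X$ (empty word $\mathbf 1$) with coefficients in $R$, with product $(PQ)_w=\sum_{w=uv}P_uQ_v$; $R\langle X\rangle$ is the subring of finite sums. Given a disjoint alphabet $Z=\{z_1,\dots,z_m\}$, a proper algebraic system is a set of equations $z_i=p_i(X,Z)$ with $p_i\in R\langle X\cup Z\rangle$ having no constant term and no term of the form $c z_j$; a solution is $(P_1,\dots,P_m)\in R\langle\langle X\rangle\rangle^m$ with $(P_i)_{\mathbf 1}=0$ and $P_i=p_i(X,P_1,\dots,P_m)$. $P$ is algebraic if $P-P_{\mathbf 1}\mathbf 1$ is a component of a solution of some proper algebraic system. $P^\alpha$ denotes the series $\mu(\alpha)\alpha+\sum_{\text{loops based at }\alpha}\mathrm{Tr}(X_{\epsilon_1}\cdots X_{\epsilon_n})\epsilon_1\cdots\epsilon_n$. *)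

(* Defs.v *)
(* Coefficients: C := R[i] with R : realType (a realType is a
   complete archimedean ordered field, i.e. a copy of the reals). *)
From HB Require Import structures.
From mathcomp Require Import all_boot all_order all_algebra.
From mathcomp Require Import complex.
From mathcomp Require Import reals.
Set Implicit Arguments. Unset Strict Implicit. Unset Printing Implicit Defensive.
Import Order.TTheory GRing.Theory Num.Theory.
Local Open Scope ring_scope.

Section NCSeries.
Variables (K : comNzRingType).

Definition ncseries (X : Type) := seq X -> K.

Definition ncone (X : eqType) : ncseries X := fun w => (w == [::])%:R.
Definition ncletter (X : eqType) (x : X) : ncseries X := fun w => (w == [:: x])%:R.

Definition ncmul (X : Type) (P Q : ncseries X) : ncseries X :=
  fun w => \sum_(i < (size w).+1) P (take i w) * Q (drop i w).

(* a noncommutative polynomial in K<Y>: a formal finite linear combination of words *)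
Definition ncpoly (Y : Type) := seq (K * seq Y).

Definition ncpoly_coef (Y : eqType) (p : ncpoly Y) (w : seq Y) : K :=
  \sum_(t <- p) (if t.2 == w then t.1 else 0).

Definition nceval_word (X : eqType) (Y : Type) (sub : Y -> ncseries X) (w : seq Y)
  : ncseries X := foldr (fun y acc => ncmul (sub y) acc) (@ncone X) w.

Definition nceval (X : eqType) (Y : Type) (sub : Y -> ncseries X) (p : ncpoly Y)
  : ncseries X := fun u => \sum_(t <- p) t.1 * nceval_word sub t.2 u.

(* Alphabet X u Z with Z = {z_0, ..., z_(m-1)} *)
Definition nc_subst (X : eqType) (m : nat) (Ps : 'I_m -> ncseries X)
  : (X + 'I_m)%type -> ncseries X :=
  fun y => match y with inl x => ncletter x | inr j => Ps j end.

Definition proper_system (X : eqType) (m : nat) (p : 'I_m -> ncpoly (X + 'I_m)) :=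
  forall i, ncpoly_coef (p i) [::] = 0 /\ forall j, ncpoly_coef (p i) [:: inr j] = 0.

Definition is_solution (X : eqType) (m : nat) (p : 'I_m -> ncpoly (X + 'I_m))
  (Ps : 'I_m -> ncseries X) :=
  forall i, Ps i [::] = 0 /\ forall w, Ps i w = nceval (nc_subst Ps) (p i) w.

Definition nc_algebraic (X : eqType) (P : ncseries X) :=
  exists (m : nat) (p : 'I_m -> ncpoly (X + 'I_m)) (Ps : 'I_m -> ncseries X) (i : 'I_m),
    [/\ proper_system p, is_solution p Ps &
        forall w, P w - P [::] * ncone w = Ps i w].

End NCSeries.

(* Finite graphs (loops and multiple edges allowed).                    *)
(* An undirected edge e has endpoints {end1 e, end2 e}.                 *)
Record graph := Graph {
  gV : finType;
  gE : finType;
  end1 : gE -> gV;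
  end2 : gE -> gV }.

Section Graph.
Variable G : graph.

Definition is_loop (e : gE G) : bool := end1 e == end2 e.

Definition adjacent (u v : gV G) : bool :=
  [exists e : gE G, ((end1 e == u) && (end2 e == v)) || ((end1 e == v) && (end2 e == u))].

Definition connected_graph : Prop := forall u v : gV G, connect adjacent u v.

(* directed edges: a non-loop e gives (e,true) and (e,false); a loop gives (e,true) only *)
Definition dedge := {x : gE G * bool | ~~ is_loop x.1 || x.2}.

Definition dsrc (d : dedge) : gV G :=
  if (val d).2 then end1 (val d).1 else end2 (val d).1.
Definition dtgt (d : dedge) : gV G :=
  if (val d).2 then end2 (val d).1 else end1 (val d).1.

(* epsilon^op (for a loop, epsilon^op = epsilon) *)
Definition dop (d : dedge) : dedge := insubd d ((val d).1, ~~ (val d).2).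

Definition dpos (e : gE G) : dedge := Sub (e, true) (orbT _).

Definition loop_at (a : gV G) (s : seq dedge) : bool :=
  match s with
  | [::] => false
  | d :: s' => [&& dsrc d == a,
                   path (fun x y => dtgt x == dsrc y) d s' &
                   dtgt (last d s') == a]
  end.

(* The full Fock space F(X).  X^{(x) n} has the orthogonal basis of      *)
(* composable paths eps_1 (x) ... (x) eps_n, and C = C(V) the basis p_v. *)
(* A basis element is encoded as (a, s): s a path starting at vertex a  *)
(* (s = [::] encodes p_a).  Vectors are coefficient functions.          *)
Variable R : realType.
Local Notation C := (R[i]).

Definition fock := (gV G * seq dedge)%type -> C.
Definition fop := fock -> fock.

Definition vac (v : gV G) : fock := fun x => ((x.1 == v) && (x.2 == [::]))%:R.

(* creation l(eps): (a', s) with a' = t(eps)  |->  (s(eps), eps :: s) *)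
Definition creat (d : dedge) : fop := fun f x =>
  match x.2 with
  | e' :: s' => if (e' == d) && (x.1 == dsrc d) then f (dtgt d, s') else 0
  | [::] => 0
  end.

(* annihilation l(eps)^* : (s(eps), eps :: s) |-> (t(eps), s); kills the rest *)
Definition annih (d : dedge) : fop := fun f x =>
  if x.1 == dtgt d then f (dsrc d, d :: x.2) else 0.

Definition projv (v : gV G) : fop := fun f x => if x.1 == v then f x else 0.

Definition fop_add (A B : fop) : fop := fun f x => A f x + B f x.
Definition fop_scale (c : C) (A : fop) : fop := fun f x => c * A f x.

Definition afac (mu : gV G -> R) (d : dedge) : R :=
  Num.sqrt (Num.sqrt (mu (dsrc d) / mu (dtgt d))).

Definition Xedge (mu : gV G -> R) (e : gE G) : fop :=
  let eps := dpos e in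
  if is_loop e then fop_add (creat eps) (annih eps)
  else
    let a := (afac mu eps)%:C%C in
    fop_add (fop_add (fop_scale a (creat eps)) (fop_scale a^-1 (annih (dop eps))))
            (fop_add (fop_scale a^-1 (creat (dop eps))) (fop_scale a (annih eps))).

Definition Xd (mu : gV G -> R) (d : dedge) : fop :=
  fun f => projv (dsrc d) (Xedge mu (val d).1 (projv (dtgt d) f)).

Definition Xword (mu : gV G -> R) (s : seq dedge) : fop :=
  foldr (fun d A f => Xd mu d (A f)) id s.

(* Tr = tr o E, E(x) = PxP; for x right C-linear, E(x) = sum_v <p_v, x p_v> p_v *)
Definition Tr (mu : gV G -> R) (A : fop) : C :=
  \sum_(v : gV G) (mu v)%:C%C * A (vac v) (v, [::]).

Definition letter := (dedge + gV G)%type.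

Definition get_dedge (l : letter) : option dedge :=
  if l is inl d then Some d else None.

Definition Palpha (mu : gV G -> R) (a : gV G) : ncseries C letter := fun w =>
  (mu a)%:C%C * (w == [:: inr a])%:R +
  (let s := pmap get_dedge w in
   if (w == map inl s) && loop_at a s then Tr mu (Xword mu s) else 0).

End Graph.

(* Main.v *)
Require Import Defs.
From HB Require Import structures.
From mathcomp Require Import all_boot all_order all_algebra.
From mathcomp Require Import complex reals.
From mathcomp Require Import ring.
Set Implicit Arguments. Unset Strict Implicit. Unset Printing Implicit Defensive.
Import Order.TTheory GRing.Theory Num.Theory.
Local Open Scope ring_scope.

Section Proof.
Variables (R : realType) (G : graph) (mu : gV G -> R).
Local Notation C := (R[i]).
Local Notation dE := (dedge G).

Definition Aof (d : dE) : C := (afac mu (dpos (val d).1))%:C%C.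
Definition cr (d : dE) : C :=
  if is_loop (val d).1 then 1 else if (val d).2 then Aof d else (Aof d)^-1.
Definition an (d : dE) : C :=
  if is_loop (val d).1 then 1 else if (val d).2 then (Aof d)^-1 else Aof d.

Lemma dsrc_dop (d : dE) : dsrc (dop d) = dtgt d.
Proof.
rewrite /dop /dsrc /dtgt val_insubd.
case: d => [[e b] Hd] /=.
case: b Hd; rewrite ?orbT ?orbF //= => Hd.
by case: (boolP (is_loop e)) => //= /eqP.
Qed.

Lemma dtgt_dop (d : dE) : dtgt (dop d) = dsrc d.
Proof.
rewrite /dop /dsrc /dtgt val_insubd.
case: d => [[e b] Hd] /=.
case: b Hd; rewrite ?orbT ?orbF //= => Hd.
by case: (boolP (is_loop e)) => //= /eqP.
Qed.

Lemma dopK (d : dE) : dop (dop d) = d.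
Proof.
  apply: val_inj; rewrite /dop !val_insubd.
  case: d => [[e b] Hd] /=. case: b Hd => /=; rewrite ?orbT ?orbF ?negbK /=.
    by move=> _; case: ifP => //=; case: ifP => //= ->.
  by move=> Hd; rewrite Hd.
Qed.

Lemma creat_eval (c : dE) (h : fock G R) a p :
  creat c h (a, p) = if p is d' :: p' then ((d' == c) && (a == dsrc c))%:R * h (dtgt c, p') else 0.
Proof. by rewrite /creat /=; case: p => // d' p'; case: ifP; rewrite ?mul1r ?mul0r. Qed.

Lemma annih_eval (c : dE) (h : fock G R) a p :
  annih c h (a, p) = (a == dtgt c)%:R * h (dsrc c, c :: p).
Proof. by rewrite /annih /=; case: ifP; rewrite ?mul1r ?mul0r. Qed.

Lemma projv_eval v (h : fock G R) a p :
  Defs.projv v h (a, p) = (a == v)%:R * h (a, p).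
Proof. by rewrite /Defs.projv /=; case: ifP; rewrite ?mul1r ?mul0r. Qed.

Lemma Xd_step (d : dE) (g : fock G R) a p :
  Xd mu d g (a, p) =
  if a == dsrc d then
    cr d * (if p is d' :: p' then (d' == d)%:R * g (dtgt d, p') else 0)
    + an d * g (dtgt d, dop d :: p)
  else 0.
Proof.
rewrite /Xd projv_eval.
case: eqP => [->{a}|_]; last by rewrite mul0r.
rewrite mul1r.
have dsd := dopK d.
case: d dsd => [[e b] Hd] dsd.
rewrite /Xedge /cr /an /Aof /=.
set d := exist _ (e, b) Hd.
set A := (afac mu (dpos e))%:C%C.
case: (boolP (is_loop e)) => Hl.
  have db : b by move: (Hd); rewrite Hl.
  have dd : d = dpos e by apply: val_inj; rewrite /= db.
  have dop_d : dop d = d.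
    by apply: val_inj; rewrite /dop val_insubd /= Hl db.
  have st : dsrc d = dtgt d by rewrite /dsrc /dtgt /= db; apply/eqP.
  rewrite -dd /fop_add creat_eval annih_eval dop_d -st eqxx !mul1r !projv_eval st eqxx mul1r.
  case: p => [|d' p'] //.
  by rewrite projv_eval eqxx mul1r andbT.
have ne : (end1 e == end2 e) = false by apply/negbTE.
case: b in Hd d dsd *.
  have dd : d = dpos e by apply: val_inj.
  rewrite -dd /fop_add /fop_scale !creat_eval !annih_eval !dsrc_dop !dtgt_dop.
  rewrite !projv_eval /dsrc /dtgt /= eqxx ne !mul0r !mulr0 !addr0 mul1r eqxx mul1r.
  case: p => [|d' p']; first by rewrite !mulr0 addr0.
  by rewrite andbT andbF mul0r mulr0 addr0 projv_eval eqxx mul1r.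
have dd : d = dop (dpos e) by apply: val_inj; rewrite /dop val_insubd /= Hl.
have dd' : dpos e = dop d by rewrite dd dopK.
rewrite dd' /fop_add /fop_scale !creat_eval !annih_eval !dsrc_dop !dtgt_dop.
have sd : (dsrc d == dtgt d) = false by rewrite /dsrc /dtgt /= eq_sym ne.
rewrite !dopK !dsrc_dop !projv_eval sd !eqxx !mul0r !mul1r !mulr0 ?add0r ?addr0.
case: p => [|d' p']; first by rewrite !mulr0 !add0r.
by rewrite andbF andbT mul0r mulr0 add0r projv_eval eqxx mul1r.
Qed.


Lemma natF : (false%:R : C) = 0. Proof. by []. Qed.
Lemma natT : (true%:R : C) = 1. Proof. by []. Qed.

Lemma Xword_cons d s (f : fock G R) : Xword mu (d :: s) f = Xd mu d (Xword mu s f).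
Proof. by []. Qed.

Lemma Xword_split (c : gV G) (x : dE) (p : seq dE) (s : seq dE) : forall a q,
  Xword mu s (vac R c) (a, q ++ x :: p) =
  \sum_(i < size s) Xword mu (take i s) (vac R (dsrc x)) (a, q)
      * ((nth x s i == x)%:R * cr x) * Xword mu (drop i.+1 s) (vac R c) (dtgt x, p).
Proof.
elim: s => [|d s IH] a q.
  by rewrite big_ord0 /= /vac /=; case: q => [|y q] /=; rewrite andbF.
rewrite Xword_cons Xd_step big_ord_recl.
under eq_bigr => i _ do rewrite lift0 [take _ _]/= [drop _ _]/= [nth _ _ _]/= Xword_cons Xd_step.
rewrite [take _ _]/= [drop _ _]/= [nth _ _ _]/=.
have -> : Xword mu [::] (vac R (dsrc x)) (a, q) = ((a == dsrc x) && (q == [::]))%:R by [].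
case: (eqVneq a (dsrc d)) => Ha; last first.
  rewrite big1 => [|i _]; last by rewrite !mul0r.
  rewrite addr0; case: (eqVneq d x) => [Edx|ndx]; last by rewrite natF mul0r mulr0 mul0r.
  by rewrite -Edx (negbTE Ha) natF !mul0r.
subst a.
case: q => [|y q] /=.
  have -> := IH (dtgt d) [:: dop d].
  rewrite big_distrr /= andbT.
  congr (_ + _); last by apply: eq_bigr => i _; rewrite mulr0 add0r !mulrA.
  case: (eqVneq d x) => [<-|ndx]; first by rewrite eqxx natT !mul1r drop0.
  by rewrite natF !mul0r !mulr0 mul0r.
rewrite IH (IH _ [:: dop d, y & q]) andbF natF !mul0r add0r.
rewrite !big_distrr -big_split /=; apply: eq_bigr => i _.
by rewrite mulrDl mulrDl !mulrA.
Qed.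

Definition M (v : gV G) (s : seq dE) : C := Xword mu s (vac R v) (v, [::]).

Lemma M_nil v : M v [::] = 1.
Proof. by rewrite /M /= /vac /= !eqxx. Qed.

Lemma M_cons v d s : M v (d :: s) =
  (v == dsrc d)%:R * (an d * cr (dop d)) *
  \sum_(i < size s) M (dtgt d) (take i s) * (nth (dop d) s i == dop d)%:R * M v (drop i.+1 s).
Proof.
rewrite /M Xword_cons Xd_step.
case: eqVneq => [Hv|_]; last by rewrite natF !mul0r.
rewrite mulr0 add0r.
have -> := Xword_split v (dop d) [::] s (dtgt d) [::].
rewrite dsrc_dop dtgt_dop -Hv big_distrr big_distrr /=; apply: eq_bigr => i _.
rewrite natT; ring.
Qed.

Fixpoint walk (a : gV G) (s : seq dE) (c : gV G) : bool :=
  if s is d :: s' then (a == dsrc d) && walk (dtgt d) s' c else a == c.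

Lemma Xword_walk c s : forall a q, Xword mu s (vac R c) (a, q) != 0 -> walk a s c.
Proof.
elim: s => [|d s IH] a q /=.
  by rewrite /vac /=; case: (a == c); rewrite //= natF eqxx.
rewrite Xd_step; case: (eqVneq a (dsrc d)) => [Ha|_]; last by rewrite /= eqxx.
move=> /= H; case Hw: (walk (dtgt d) s c) => //.
have Z q' : Xword mu s (vac R c) (dtgt d, q') = 0.
  case E: (Xword mu s (vac R c) (dtgt d, q') == 0); first exact/eqP.
  by move: (IH (dtgt d) q'); rewrite E Hw => /(_ isT).
by move: H; case: q => [|y q]; rewrite ?Z ?mulr0 ?addr0 ?eqxx.
Qed.

Lemma walk_path d s c :
  walk (dtgt d) s c = path (fun x y => dtgt x == dsrc y) d s && (dtgt (last d s) == c).
Proof. by elim: s d => [|d' s IH] d //=; rewrite IH andbA. Qed.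

Lemma loop_walk a d s : loop_at a (d :: s) = walk a (d :: s) a.
Proof. by rewrite /loop_at /= walk_path eq_sym andbA. Qed.

Lemma Tr_loop a s : loop_at a s -> Tr mu (Xword mu s) = (mu a)%:C%C * M a s.
Proof.
case: s => [|d s] // Hl.
have Ha : dsrc d = a by move: Hl; rewrite /loop_at => /and3P[/eqP].
rewrite /Tr (bigD1 a) //= big1 ?addr0 // => v Hv.
by rewrite -Xword_cons -/(M v _) M_cons Ha (negbTE Hv) natF !mul0r mulr0.
Qed.

Lemma M_notloop a s : s != [::] -> ~~ loop_at a s -> M a s = 0.
Proof.
case: s => [|d s] // _ Hl; apply/eqP; apply: contraNT Hl => H.
by rewrite loop_walk; apply: (Xword_walk H).
Qed.

Local Notation L := (letter G).
Local Notation one := (@ncone C L).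

Lemma ncmul_letter (x : L) (Q : ncseries C L) y w :
  ncmul (ncletter C x) Q (y :: w) = (y == x)%:R * Q w.
Proof.
rewrite /ncmul big_ord_recl big_ord_recl /ncletter /= !add0n -/(size _) take0 drop0.
rewrite mul0r add0r eqseq_cons andbT.
case: w => [|z w]; first by rewrite big_ord0 addr0.
by rewrite big1 ?addr0 // => i _; rewrite /bump leq0n /= eqseq_cons andbF natF mul0r.
Qed.

Lemma ncmul_letter0 (x : L) (Q : ncseries C L) :
  ncmul (ncletter C x) Q [::] = 0.
Proof. by rewrite /ncmul big_ord1 /ncletter /= natF mul0r. Qed.

Lemma ncmul1l (Q : ncseries C L) w : ncmul one Q w = Q w.
Proof.
rewrite /ncmul big_ord_recl /ncone /= -/(size _) take0 drop0 mul1r.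
case: w => [|z w]; first by rewrite big_ord0 addr0.
by rewrite big1 ?addr0 // => i _; rewrite /bump leq0n /= natF mul0r.
Qed.

Lemma ncmul1r (P : ncseries C L) w : ncmul P one w = P w.
Proof.
rewrite /ncmul big_ord_recr /ncone /= take_size drop_size eqxx natT mulr1.
rewrite big1 ?add0r // => i _.
have -> : (drop i w == [::]) = false.
  by rewrite -size_eq0 size_drop subn_eq0 leqNgt ltn_ord.
by rewrite natF mulr0.
Qed.

Lemma ncmulDl (P Q S : ncseries C L) c w :
  ncmul (fun u => P u + c * Q u) S w = ncmul P S w + c * ncmul Q S w.
Proof.
rewrite /ncmul big_distrr -big_split /=; apply: eq_bigr => i _; ring.
Qed.

Lemma ncmulDr (P Q S : ncseries C L) c w :
  ncmul P (fun u => Q u + c * S u) w = ncmul P Q w + c * ncmul P S w.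
Proof.
rewrite /ncmul big_distrr -big_split /=; apply: eq_bigr => i _; ring.
Qed.

Lemma ncmul_ext (P P' Q Q' : ncseries C L) w :
  (forall u, P u = P' u) -> (forall u, Q u = Q' u) -> ncmul P Q w = ncmul P' Q' w.
Proof. by move=> HP HQ; apply: eq_bigr => i _; rewrite HP HQ. Qed.

Definition isd (l : L) : bool := if l is inl _ then true else false.
Definition F (v : gV G) (w : seq L) : C := (all isd w)%:R * M v (pmap (@get_dedge G) w).
Definition Gs (v : gV G) (w : seq L) : C := if w is [::] then 0 else F v w.

Lemma pmap_inl (s : seq dE) : pmap (@get_dedge G) (map inl s) = s.
Proof. by elim: s => //= d s ->. Qed.

Lemma all_isd_inl (s : seq dE) : all isd (map inl s) = true.
Proof. by elim: s. Qed.

Lemma all_isdP (w : seq L) : all isd w -> w = map inl (pmap (@get_dedge G) w).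
Proof. by elim: w => [|[d|u] w IH] //= /IH <-. Qed.

Lemma F_inl v s : F v (map inl s) = M v s.
Proof. by rewrite /F all_isd_inl pmap_inl natT mul1r. Qed.

Lemma inner (t v : gV G) (o : dE) (w : seq L) :
  \sum_(i < (size w).+1) F t (take i w) *
     (if drop i w is y :: r then (y == inl o)%:R * F v r else 0)
  = (all isd w)%:R *
    \sum_(i < size (pmap (@get_dedge G) w))
      M t (take i (pmap (@get_dedge G) w)) * (nth o (pmap (@get_dedge G) w) i == o)%:R
      * M v (drop i.+1 (pmap (@get_dedge G) w)).
Proof.
case Hw: (all isd w); last first.
  rewrite natF mul0r big1 // => i _.
  have := cat_take_drop i w; move: Hw => /[swap] {1}<-.
  rewrite all_cat; case Ht: (all isd (take i w)) => /= Hd; last first.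
    by rewrite /F Ht natF !mul0r.
  case: (drop i w) Hd => [|[y|u] r] //=; last by rewrite mul0r mulr0.
  by move=> Hr; rewrite /F Hr natF !mul0r !mulr0.
rewrite natT mul1r (all_isdP Hw) pmap_inl.
set s := pmap _ w.
rewrite size_map big_ord_recr /= drop_oversize ?size_map // mulr0 addr0.
apply: eq_bigr => i _.
rewrite -map_take F_inl -map_drop (drop_nth o) ?ltn_ord //= F_inl.
by rewrite mulrA.
Qed.

Lemma muC_neq0 (mu_pos : forall v, 0 < mu v) v : (mu v)%:C%C != 0 :> C.
Proof.
apply/eqP => /(congr1 (fun z : C => complex.Re z)) /= H.
by have := mu_pos v; rewrite H ltxx.
Qed.

Definition m := #|gV G|.
Definition vx (j : 'I_m) : gV G := enum_val j.
Definition rk (v : gV G) : 'I_m := enum_rank v.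
Lemma vxrk v : vx (rk v) = v. Proof. exact: enum_rankK. Qed.

Definition Ps (j : 'I_m) : ncseries C L := fun w => (mu (vx j))%:C%C * Gs (vx j) w.
Local Notation Y := (L + 'I_m)%type.
Definition LL (d : dE) : Y := inl (inl d).
Definition kap (d : dE) : C := an d * cr (dop d).
Definition kk (j : 'I_m) (d : dE) : C := (mu (vx j))%:C%C * kap d * (vx j == dsrc d)%:R.
Definition ct (d : dE) : C := ((mu (dtgt d))%:C%C)^-1.
Definition cv (j : 'I_m) : C := ((mu (vx j))%:C%C)^-1.
Definition monos (j : 'I_m) (d : dE) : ncpoly C Y :=
 [:: (kk j d, [:: LL d; LL (dop d)]); (kk j d * ct d, [:: LL d; inr (rk (dtgt d)); LL (dop d)]);
     (kk j d * cv j, [:: LL d; LL (dop d); inr j]);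
     (kk j d * ct d * cv j, [:: LL d; inr (rk (dtgt d)); LL (dop d); inr j])].
Definition sys (j : 'I_m) : ncpoly C Y := flatten [seq monos j d | d <- enum {: dE}].

Lemma sys_proper : proper_system sys.
Proof.
move=> i; split => [|j]; rewrite /ncpoly_coef big_flatten big_map big1 // => d _;
  by rewrite /monos !big_cons big_nil /= !addr0.
Qed.

Definition Fx (c : C) (P : ncseries C L) : ncseries C L := fun u => one u + c * P u.

Lemma nw2 a b w : nceval_word (nc_subst Ps) [:: a; b] w =
  ncmul (nc_subst Ps a) (ncmul (nc_subst Ps b) one) w.
Proof. by []. Qed.
Lemma nw3 a b c w : nceval_word (nc_subst Ps) [:: a; b; c] w =
  ncmul (nc_subst Ps a) (ncmul (nc_subst Ps b) (ncmul (nc_subst Ps c) one)) w.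
Proof. by []. Qed.
Lemma nw4 a b c e w : nceval_word (nc_subst Ps) [:: a; b; c; e] w =
  ncmul (nc_subst Ps a) (ncmul (nc_subst Ps b) (ncmul (nc_subst Ps c) (ncmul (nc_subst Ps e) one))) w.
Proof. by []. Qed.
Lemma nsl (x : L) : nc_subst Ps (inl x) = ncletter C x. Proof. by []. Qed.
Lemma nsr (j : 'I_m) : nc_subst Ps (inr j) = Ps j. Proof. by []. Qed.

Lemma monos_eval j d w :
  \sum_(t <- monos j d) t.1 * nceval_word (nc_subst Ps) t.2 w =
  kk j d * ncmul (ncletter C (inl d))
     (ncmul (Fx (ct d) (Ps (rk (dtgt d)))) (ncmul (ncletter C (inl (dop d))) (Fx (cv j) (Ps j)))) w.
Proof.
rewrite /monos !big_cons big_nil addr0 ![(_, _).1]/= ![(_, _).2]/= nw2 nw3 nw3 nw4 /LL !nsl !nsr.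
case: w => [|y w]; first by rewrite !ncmul_letter0 !mulr0 !addr0.
rewrite !ncmul_letter.
rewrite /Fx ncmulDl ncmul1l ncmulDr.
rewrite (@ncmul_ext (Ps (rk (dtgt d))) (Ps (rk (dtgt d))) _
   (fun u => ncmul (ncletter C (inl (dop d))) one u +
             cv j * ncmul (ncletter C (inl (dop d))) (ncmul (Ps j) one) u)); last first.
- move=> u; rewrite ncmulDr; congr (_ + _ * _); apply: ncmul_ext => // r.
  by rewrite ncmul1r.
- by [].
rewrite ncmulDr.
rewrite (@ncmul_ext (ncletter C (inl (dop d))) (ncletter C (inl (dop d))) (Ps j) (ncmul (Ps j) one)) //; last first.
  by move=> r; rewrite ncmul1r.
ring.
Qed.

Lemma ncmulE (P Q : ncseries C L) w :
  ncmul P Q w = \sum_(i < (size w).+1) P (take i w) * Q (drop i w).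
Proof. by []. Qed.

Lemma Fx_Fj (mu_pos : forall v, 0 < mu v) j u : Fx (cv j) (Ps j) u = F (vx j) u.
Proof.
rewrite /Fx /Ps /cv mulrA mulVf ?muC_neq0 // mul1r.
case: u => [|y u]; first by rewrite /ncone /Gs /F /= M_nil addr0 mul1r.
by rewrite /ncone /Gs /= ?natF add0r.
Qed.

Lemma Fx_F (mu_pos : forall v, 0 < mu v) d u :
  Fx (ct d) (Ps (rk (dtgt d))) u = F (dtgt d) u.
Proof. by have := Fx_Fj mu_pos (rk (dtgt d)) u; rewrite /cv /ct vxrk. Qed.

Lemma inner_eq (mu_pos : forall v, 0 < mu v) d j w :
  ncmul (Fx (ct d) (Ps (rk (dtgt d)))) (ncmul (ncletter C (inl (dop d))) (Fx (cv j) (Ps j))) w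
  = \sum_(i < (size w).+1) F (dtgt d) (take i w) *
     (if drop i w is y :: r then (y == inl (dop d))%:R * F (vx j) r else 0).
Proof.
rewrite ncmulE; apply: eq_bigr => i _; rewrite Fx_F //.
case: (drop i w) => [|y r]; first by rewrite ncmul_letter0.
by rewrite ncmul_letter Fx_Fj.
Qed.

Lemma inl_eq (a b : dE) : (inl a == inl b :> L) = (a == b).
Proof. by []. Qed.

Lemma sol (mu_pos : forall v, 0 < mu v) j w : Ps j w = nceval (nc_subst Ps) (sys j) w.
Proof.
rewrite /nceval /sys big_flatten big_map.
under eq_bigr => d _ do rewrite monos_eval.
case: w => [|y w].
  by rewrite big1 => [|d _]; [rewrite /Ps /= mulr0 | rewrite ncmul_letter0 mulr0].
under eq_bigr => d _ do rewrite ncmul_letter inner_eq // inner.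
rewrite big_enum /=.
case: y => [d0|u]; last first.
  rewrite big1 => [|d _]; last by rewrite natF !mul0r mulr0.
  by rewrite /Ps /Gs /F /= natF !mul0r mulr0.
rewrite (bigD1 d0) //= [X in _ = _ + X]big1 ?addr0 => [|d Hd]; last first.
  by rewrite inl_eq eq_sym (negbTE Hd) natF !mul0r mulr0.
rewrite inl_eq eqxx natT mul1r /Ps /Gs /F /= M_cons /kk /kap.
ring.
Qed.

Lemma Ps_nil j : Ps j [::] = 0.
Proof. by rewrite /Ps /= mulr0. Qed.

Lemma Gs_cons v s : s != [::] -> Gs v (map inl s) = M v s.
Proof. by case: s => // d s _; exact: (F_inl v (d :: s)). Qed.

Lemma Q_eq a w :
  Palpha mu a w - (mu a)%:C%C * @ncletter _ _ (inr a) w = (mu a)%:C%C * Gs a w.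
Proof.
rewrite /Palpha /ncletter addrAC subrr add0r.
case Hw: (all isd w); last first.
  have -> : (w == map inl (pmap (@get_dedge G) w)) = false.
    by apply/negbTE/eqP => E; move: Hw; rewrite E all_isd_inl.
  case: w Hw => [|y w] //= Hw.
  by rewrite /F /= Hw natF !mul0r mulr0.
rewrite (all_isdP Hw) pmap_inl eqxx.
move: (pmap _ w) => s.
case: s => [|d s]; first by rewrite /= mulr0.
rewrite (@Gs_cons a (d :: s)) //.
case Hl: (loop_at a (d :: s)); first by rewrite (Tr_loop Hl).
by rewrite M_notloop ?Hl // mulr0.
Qed.
End Proof.

Unset Implicit Arguments.
Set Strict Implicit.

Theorem lemma3p12 (R : realType) (G : graph) (mu : gV G -> R)
  (Gconn : connected_graph G) (mu_pos : forall v, 0 < mu v) (alpha : gV G) :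
  nc_algebraic
    (fun w : seq (letter G) => Palpha mu alpha w - (mu alpha)%:C%C * @ncletter _ _ (inr alpha) w).
Proof.
exists (m G), (sys mu), (Ps mu), (rk alpha); split.
- exact: sys_proper.
- by move=> i; split; [exact: Ps_nil | move=> w; exact: sol].
- move=> w; rewrite !Q_eq /Gs mulr0 mul0r subr0 /Ps vxrk.
  by case: w.
Qed.
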